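(* For each prime power $q$, there exists an $[n,3]_q$ MWS code with $n\le\frac{q-1}{2}\left(q^3+q^2+q\right)$.
   Context: An $[n,k]_q$ code is a $k$-dimensional subspace of $\mathbb{F}_q^n$, non-degenerate (no coordinate identically zero on the code). It is MWS if the set of its non-zero Hamming weights has cardinality $\frac{q^k-1}{q-1}$. *)

(* Defs.v *)
From HB Require Import structures.
From mathcomp Require Import all_boot all_order all_algebra finalg.
Set Implicit Arguments. Unset Strict Implicit. Unset Printing Implicit Defensive.
Import GRing.Theory.
Local Open Scope ring_scope.

(* Linear codes over a finite field F: a code of length n is a subspace
   C : {vspace 'rV[F]_n}; it is an [n,k]_q code when \dim C = k and #|F| = q. *)

Definition wt (F : finFieldType) (n : nat) (v : 'rV[F]_n) : nat :=
  #|[set i : 'I_n | v 0 i != 0]|.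

Definition nondeg_code (F : finFieldType) (n : nat) (C : {vspace 'rV[F]_n}) : Prop :=
  forall i : 'I_n, exists2 v, v \in C & v 0 i != 0.

Definition nonzero_weights (F : finFieldType) (n : nat) (C : {vspace 'rV[F]_n})
  : seq nat :=
  undup [seq wt v | v <- enum 'rV[F]_n & (v \in C) && (v != 0)].

Definition MWS (F : finFieldType) (n : nat) (C : {vspace 'rV[F]_n}) : Prop :=
  size (nonzero_weights C) = ((#|F| ^ (\dim C)%N - 1) %/ (#|F| - 1))%N.

(* Main.v *)
Require Import Defs.
From HB Require Import structures.
From mathcomp Require Import all_boot all_order all_algebra.
From mathcomp Require Import all_fingroup.
From mathcomp Require Import zify ring.
Set Implicit Arguments. Unset Strict Implicit. Unset Printing Implicit Defensive.
Import GRing.Theory.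

Lemma digit_eq (q d0 e0 k k' : nat) : d0 < q -> e0 < q ->
  d0 + q * k = e0 + q * k' -> d0 = e0 /\ k = k'.
Proof.
move=> hd he H.
have q0 : 0 < q by lia.
have H1 := congr1 (modn^~ q) H; have H2 := congr1 (divn^~ q) H.
move: H1 H2 => /=; rewrite ![q * _]mulnC ![_ + _ * q]addnC !modnMDl !divnMDl //.
rewrite !modn_small // !divn_small // !addn0 //.
Qed.

Lemma tri_sum (m : nat) : (\sum_(i < m) (i : nat)) * 2 = m * (m - 1).
Proof.
elim: m => [|m IH]; first by rewrite big_ord0.
rewrite big_ord_recr /= mulnDl IH. case: m {IH} => [|m] //=. nia.
Qed.

Lemma card_count (T : Type) (x0 : T) (s : seq T) (P : pred T) :
  #|[set k : 'I_(size s) | P (nth x0 s k)]| = count P s.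
Proof.
rewrite cardsE -sum1_card -sum1_count (big_nth x0) big_mkord.
by apply: eq_bigl => k.
Qed.
Section Cons.
Variable F : finFieldType.
Local Notation q := #|F|.
Variable r : F -> nat.
Hypothesis r_inj : injective r.
Hypothesis r_lt : forall c, r c < q.
Hypothesis r_zero : r 0%R = q./2.
Hypothesis r_m1 : r (-1)%R = 0.

Definition o0 : 'I_3 := @Ordinal 3 0 isT.
Definition o1 : 'I_3 := @Ordinal 3 1 isT.
Definition o2 : 'I_3 := @Ordinal 3 2 isT.

Definition dot (x : 'rV[F]_3) (p : F * F * F) : F :=
  (x ord0 o0 * p.1.1 + x ord0 o1 * p.1.2 + x ord0 o2 * p.2)%R.

Definition blk (m : F -> nat) (p : F -> F * F * F) : seq (F * F * F) :=
  flatten [seq nseq (m c) (p c) | c <- index_enum F].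

Definition r' (c : F) : nat := if c == 0%R then 0 else r c.

Definition cols : seq (F * F * F) :=
  nseq (q * q) (0, 0, 1)%R ++ blk r (fun c => (1, 0, c)%R) ++
  blk (fun c => q * r c) (fun c => (0, 1, c)%R) ++
  blk (fun c => q * q * r' c) (fun c => (1, c, 0)%R).

Definition Z (x : 'rV[F]_3) : nat := count (fun p => dot x p == 0%R) cols.

Lemma count_blk (P : pred (F * F * F)) m p :
  count P (blk m p) = \sum_c m c * P (p c).
Proof.
rewrite /blk count_flatten sumnE !big_map /=.
by apply: eq_bigr => c _; rewrite count_nseq mulnC.
Qed.

Definition Lam (f : F -> nat) (a b : F) : nat :=
  if b != 0%R then f (- a / b)%R else if a == 0%R then \sum_c f c else 0.

Lemma sum_lin (f : F -> nat) (a b : F) :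
  \sum_c f c * (a + b * c == 0)%R = Lam f a b.
Proof.
rewrite /Lam; case: (eqVneq b 0%R) => [->|bn0] /=.
  case: (eqVneq a 0%R) => [->|an0].
    by apply: eq_bigr => c _; rewrite mul0r addr0 eqxx muln1.
  by rewrite big1 // => c _; rewrite mul0r addr0 (negbTE an0) muln0.
rewrite (bigD1 (- a / b)%R) //= big1 ?addn0.
  by rewrite [(b * _)%R]mulrC divfK // subrr eqxx muln1.
move=> c hc; suff -> : (a + b * c == 0)%R = false by rewrite muln0.
apply/negbTE; apply: contra hc => /eqP h; apply/eqP; apply: (mulfI bn0).
rewrite [(b * (_ / _))%R]mulrC divfK //; apply/eqP.
by rewrite -addr_eq0 addrC h.
Qed.

Lemma Zform x : Z x = q * q * (x ord0 o2 == 0%R) + Lam r (x ord0 o0) (x ord0 o2)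
   + q * Lam r (x ord0 o1) (x ord0 o2) + q * q * Lam r' (x ord0 o0) (x ord0 o1).
Proof.
rewrite /Z !count_cat !count_blk count_nseq -!sum_lin big_distrr /= big_distrr /=.
rewrite /dot /= !mulr0 !mulr1 !addr0 !add0r mulnC -!addnA; congr (_ + (_ + (_ + _))).
- by apply: eq_bigr => c _; rewrite mulnA.
- by apply: eq_bigr => c _; rewrite addr0 !mulnA.
Qed.


Local Notation T := (\sum_c r c).
Local Notation j := (q./2).
Local Notation x0 x := (x ord0 o0).
Local Notation x1 x := (x ord0 o1).
Local Notation x2 x := (x ord0 o2).

Lemma q_gt1 : 1 < q.
Proof. exact: card_finNzRing_gt1. Qed.

Lemma sum_r : T * 2 = q * (q - 1).
Proof.
pose rr (c : F) : 'I_q := Ordinal (r_lt c).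
have rr_inj : injective rr by move=> a b /(congr1 val) /= /r_inj.
have rr_bij : bijective rr by apply: inj_card_bij => //; rewrite card_ord.
rewrite -(tri_sum q); congr (_ * 2).
by rewrite (reindex rr) //=; apply: onW_bij.
Qed.

Lemma j_gt0 : 0 < j.
Proof. have := q_gt1; case: q => [|[|k]] //. Qed.

Lemma j_lt : j < q.
Proof. have := q_gt1; rewrite -{2}(odd_double_half q); case: (odd q); lia. Qed.

Lemma j_leT : j <= T.
Proof. by rewrite -r_zero (bigD1 0%R) //= leq_addr. Qed.

Lemma sum_r' : \sum_c r' c = T - j.
Proof.
rewrite [in RHS](bigD1 0%R) //= r_zero addKn [LHS](bigD1 0%R) //= /r' eqxx add0n.
by apply: eq_bigr => c /negbTE ->.
Qed.

Lemma Tpar : (odd q /\ T = q * j) \/ (~~ odd q /\ T = j + q * (j - 1)).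
Proof.
have h := sum_r; have h2 := odd_double_half q; have := j_gt0.
move: h h2; set J := j; set TT := T; set Q := q.
case: (odd Q) => /= h h2 hj; [left | right]; split => //; rewrite -h2 -muln2 in h *; nia.
Qed.

Lemma r_eq0 c : (r c == 0) = (c == -1)%R.
Proof. by rewrite -r_m1 (inj_eq r_inj). Qed.

Lemma r_eqj c : (r c == j) = (c == 0)%R.
Proof. by rewrite -r_zero (inj_eq r_inj). Qed.

Lemma Lam_le f a b : Lam f a b <= \sum_c f c.
Proof.
rewrite /Lam; case: ifP => _; first by rewrite (bigD1 (- a / b)%R) //= leq_addr.
by case: ifP.
Qed.

Lemma Lam'0 a b : [\/ a = 0%R /\ b != 0%R, a != 0%R /\ b = 0%R | a = b /\ b != 0%R] ->
  Lam r' a b = 0.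
Proof.
rewrite /Lam /r'; case=> [[-> bn0]|[an0 ->]|[-> bn0]].
- by rewrite bn0 oppr0 mul0r eqxx.
- by rewrite eqxx /= (negbTE an0).
- rewrite bn0 mulNr divff // ifN ?r_m1 //.
  by rewrite oppr_eq0 oner_eq0.
Qed.


Lemma ZG (x : 'rV[F]_3) : x2 x != 0%R ->
  Z x = r (- x0 x / x2 x)%R + q * (r (- x1 x / x2 x)%R + q * Lam r' (x0 x) (x1 x)).
Proof.
move=> h; rewrite Zform /Lam h (negbTE h) /=. nia.
Qed.

Lemma ZN (x : 'rV[F]_3) : x2 x = 0%R -> x1 x != 0%R -> x0 x != 0%R ->
  Z x = 0 + q * (0 + q * (1 + r (- x0 x / x1 x)%R)).
Proof.
move=> h2 h1 h0; rewrite Zform /Lam h2 h1 eqxx /= (negbTE h0) (negbTE h1) /r'.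
have hn : (- x0 x / x1 x)%R != 0%R by rewrite mulf_eq0 oppr_eq0 invr_eq0 negb_or h0 h1.
rewrite (negbTE hn); nia.
Qed.

Lemma ZL2 (x : 'rV[F]_3) : x2 x = 0%R -> x0 x = 0%R -> x1 x != 0%R -> Z x = q * q + T.
Proof.
move=> h2 h0 h1; rewrite Zform /Lam h2 h0 h1 eqxx /= (negbTE h1) /r'.
rewrite oppr0 mul0r eqxx. nia.
Qed.

Lemma ZL1 (x : 'rV[F]_3) : x2 x = 0%R -> x1 x = 0%R -> x0 x != 0%R -> Z x = q * q + q * T.
Proof.
move=> h2 h1 h0; rewrite Zform /Lam h2 h1 eqxx /= (negbTE h0). nia.
Qed.

Lemma Z0 : Z 0%R = q * q + T + q * T + q * q * (T - j).
Proof. by rewrite Zform /Lam !mxE eqxx /= sum_r' muln1. Qed.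

Lemma eq_row3 (x y : 'rV[F]_3) : x0 x = x0 y -> x1 x = x1 y -> x2 x = x2 y -> x = y.
Proof.
move=> h0 h1 h2; apply/rowP => -[[|[|[|k]]] hi] //.
- by rewrite (_ : Ordinal hi = o0) //; apply: val_inj.
- by rewrite (_ : Ordinal hi = o1) //; apply: val_inj.
- by rewrite (_ : Ordinal hi = o2) //; apply: val_inj.
Qed.


Lemma ratio_eq (a c b d : F) : c != 0%R -> d != 0%R -> r (- a / c)%R = r (- b / d)%R ->
  b = (d / c * a)%R.
Proof.
move=> cn dn /r_inj; rewrite !mulNr => /oppr_inj h.
by rewrite -mulrA (mulrC c^-1)%R h mulrC divfK.
Qed.

Lemma r_is0 (a c : F) : c != 0%R -> r (- a / c)%R = 0 -> a = c.
Proof.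
move=> cn; rewrite -r_m1 => /r_inj; rewrite mulNr => /oppr_inj h.
by rewrite -(divfK cn a) h mul1r.
Qed.

Lemma r_isj (a c : F) : c != 0%R -> r (- a / c)%R = j -> a = 0%R.
Proof.
move=> cn; rewrite -r_zero => /r_inj /eqP; rewrite mulf_eq0 invr_eq0 (negbTE cn) orbF.
by rewrite oppr_eq0 => /eqP.
Qed.

Lemma Lam'_le a b : Lam r' a b <= T - j.
Proof. by rewrite -sum_r'; apply: Lam_le. Qed.

Lemma ZG' (x : 'rV[F]_3) : x2 x != 0%R ->
  Z x = r (- x0 x / x2 x)%R + q * (r (- x1 x / x2 x)%R + q * Lam r' (x0 x) (x1 x)).
Proof. exact: ZG. Qed.

Lemma dig (x : 'rV[F]_3) a b c : x2 x != 0%R -> a < q -> b < q ->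
  Z x = a + q * (b + q * c) ->
  [/\ r (- x0 x / x2 x)%R = a, r (- x1 x / x2 x)%R = b & Lam r' (x0 x) (x1 x) = c].
Proof.
move=> h ha hb; rewrite ZG // => e.
case: (digit_eq (r_lt _) ha e) => -> e'.
by case: (digit_eq (r_lt _) hb e') => -> ->.
Qed.

Lemma cGN (x y : 'rV[F]_3) : x2 x != 0%R -> x2 y = 0%R -> x1 y != 0%R -> x0 y != 0%R ->
  Z x <> Z y.
Proof.
move=> hx hy2 hy1 hy0; rewrite (ZN hy2 hy1 hy0).
have q0 : 0 < q by have := q_gt1; lia.
move=> /(dig hx q0 q0) [].
move=> /(r_is0 hx) e0 /(r_is0 hx) e1; rewrite Lam'0 //.
by constructor 3; rewrite e0 e1.
Qed.

Lemma cGL2 (x y : 'rV[F]_3) : x2 x != 0%R -> x2 y = 0%R -> x0 y = 0%R -> x1 y != 0%R ->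
  Z x <> Z y.
Proof.
move=> hx hy2 hy0 hy1; rewrite (ZL2 hy2 hy0 hy1).
have hj := j_gt0; have hjq := j_lt.
have q0 : 0 < q by lia.
have hj1 : j - 1 < q by lia.
case: Tpar => [[_ ->]|[_ ->]].
- rewrite (_ : q * q + q * j = 0 + q * (j + q * 1)); last by nia.
  move=> /(dig hx q0 hjq) [].
  move=> /(r_is0 hx) e0 /(r_isj hx) e1; rewrite Lam'0 //.
  by constructor 2; rewrite e1 e0.
- rewrite (_ : q * q + (j + q * (j - 1)) = j + q * ((j - 1) + q * 1)); last by nia.
  move=> /(dig hx hjq hj1) [].
  move=> /(r_isj hx) e0 e1; rewrite Lam'0 //.
  constructor 1; split => //; apply/eqP => h0; move: e1.
  by rewrite h0 oppr0 mul0r r_zero; lia.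
Qed.

Lemma cGL1 (x y : 'rV[F]_3) : x2 x != 0%R -> x2 y = 0%R -> x1 y = 0%R -> x0 y != 0%R ->
  Z x <> Z y.
Proof.
move=> hx hy2 hy1 hy0; rewrite (ZL1 hy2 hy1 hy0).
have hj := j_gt0; have hjq := j_lt.
have q0 : 0 < q by lia.
have hj1 : j - 1 < q by lia.
case: Tpar => [[_ ->]|[_ ->]].
- rewrite (_ : q * q + q * (q * j) = 0 + q * (0 + q * (1 + j))); last by nia.
  move=> /(dig hx q0 q0) [].
  move=> /(r_is0 hx) e0 /(r_is0 hx) e1; rewrite Lam'0 //.
  by constructor 3; rewrite e0 e1.
- rewrite (_ : q * q + q * (j + q * (j - 1)) = 0 + q * (j + q * j)); last by nia.
  move=> /(dig hx q0 hjq) [].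
  move=> /(r_is0 hx) e0 /(r_isj hx) e1; rewrite Lam'0 //; first lia.
  by constructor 2; rewrite e1 e0.
Qed.

Lemma cNL2 (x y : 'rV[F]_3) : x2 x = 0%R -> x1 x != 0%R -> x0 x != 0%R ->
  x2 y = 0%R -> x0 y = 0%R -> x1 y != 0%R -> Z x <> Z y.
Proof.
move=> hx2 hx1 hx0 hy2 hy0 hy1; rewrite (ZN hx2 hx1 hx0) (ZL2 hy2 hy0 hy1).
have hT := sum_r; have hq := q_gt1.
set k := r _; set TT := T in hT *; move: hT; set Q := q; move=> hT.
case: k => [|k]; nia.
Qed.

Lemma cNL1 (x y : 'rV[F]_3) : x2 x = 0%R -> x1 x != 0%R -> x0 x != 0%R ->
  x2 y = 0%R -> x1 y = 0%R -> x0 y != 0%R -> Z x <> Z y.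
Proof.
move=> hx2 hx1 hx0 hy2 hy1 hy0; rewrite (ZN hx2 hx1 hx0) (ZL1 hy2 hy1 hy0).
have hj := j_gt0; have hjq := j_lt; have hq := q_gt1.
have q0 : 0 < q by lia.
rewrite !add0n !mulnDr !muln1 => /addnI /eqP; rewrite eqn_pmul2l // => /eqP h.
case: Tpar => [[_ e]|[_ e]]; rewrite e in h.
- have : r (- x0 x / x1 x)%R = j by apply/eqP; rewrite -(eqn_pmul2l q0) h.
  by move/(r_isj hx1)/eqP; rewrite (negbTE hx0).
- have := @digit_eq q 0 j (r (- x0 x / x1 x)%R) (j - 1) q0 hjq; rewrite add0n h => /(_ erefl) [].
  lia.
Qed.

Lemma cL2L1 (x y : 'rV[F]_3) : x2 x = 0%R -> x0 x = 0%R -> x1 x != 0%R ->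
  x2 y = 0%R -> x1 y = 0%R -> x0 y != 0%R -> Z x <> Z y.
Proof.
move=> hx2 hx0 hx1 hy2 hy1 hy0; rewrite (ZL2 hx2 hx0 hx1) (ZL1 hy2 hy1 hy0).
have hT := sum_r; have hq := q_gt1.
set TT := T in hT *; move: hT; set Q := q; move=> hT; nia.
Qed.


Lemma cls (x : 'rV[F]_3) : x != 0%R ->
  [\/ x2 x != 0%R, [/\ x2 x = 0%R, x1 x != 0%R & x0 x != 0%R],
     [/\ x2 x = 0%R, x0 x = 0%R & x1 x != 0%R] | [/\ x2 x = 0%R, x1 x = 0%R & x0 x != 0%R]].
Proof.
move=> nx; case: (eqVneq (x2 x) 0%R) => h2; last by constructor 1.
case: (eqVneq (x1 x) 0%R) => h1; case: (eqVneq (x0 x) 0%R) => h0.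
- by case/eqP: nx; apply: eq_row3; rewrite ?mxE.
- by constructor 4.
- by constructor 3.
- by constructor 2.
Qed.

Lemma scale_eq (x y : 'rV[F]_3) (l : F) :
  x0 y = (l * x0 x)%R -> x1 y = (l * x1 x)%R -> x2 y = (l * x2 x)%R -> y = (l *: x)%R.
Proof. by move=> *; apply: eq_row3; rewrite !mxE. Qed.

Lemma decode (x y : 'rV[F]_3) : x != 0%R -> y != 0%R -> Z x = Z y ->
  exists2 l : F, l != 0%R & y = (l *: x)%R.
Proof.
move=> nx ny e.
have q0 : 0 < q by have := q_gt1; lia.
case: (cls nx) => [hx|[hx2 hx1 hx0]|[hx2 hx0 hx1]|[hx2 hx1 hx0]];
case: (cls ny) => [hy|[hy2 hy1 hy0]|[hy2 hy0 hy1]|[hy2 hy1 hy0]].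
- rewrite (ZG hy) in e; case: (dig hx (r_lt _) (r_lt _) e) => e0 e1 _.
  exists (x2 y / x2 x)%R; first by rewrite mulf_neq0 ?invr_neq0.
  apply: scale_eq; [exact: ratio_eq e0 | exact: ratio_eq e1 | by rewrite divfK].
- by case: (cGN hx hy2 hy1 hy0).
- by case: (cGL2 hx hy2 hy0 hy1).
- by case: (cGL1 hx hy2 hy1 hy0).
- by case: (cGN hy hx2 hx1 hx0).
- move: e; rewrite (ZN hx2 hx1 hx0) (ZN hy2 hy1 hy0) => /eqP.
  rewrite !add0n !eqn_pmul2l // eqn_add2l => /eqP e0.
  exists (x1 y / x1 x)%R; first by rewrite mulf_neq0 ?invr_neq0.
  apply: scale_eq; [exact: ratio_eq e0 | by rewrite divfK | by rewrite hx2 hy2 mulr0].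
- by case: (cNL2 hx2 hx1 hx0 hy2 hy0 hy1).
- by case: (cNL1 hx2 hx1 hx0 hy2 hy1 hy0).
- by case: (cGL2 hy hx2 hx0 hx1).
- by case: (cNL2 hy2 hy1 hy0 hx2 hx0 hx1).
- exists (x1 y / x1 x)%R; first by rewrite mulf_neq0 ?invr_neq0.
  apply: scale_eq; [by rewrite hx0 hy0 mulr0 | by rewrite divfK | by rewrite hx2 hy2 mulr0].
- by case: (cL2L1 hx2 hx0 hx1 hy2 hy1 hy0).
- by case: (cGL1 hy hx2 hx1 hx0).
- by case: (cNL1 hy2 hy1 hy0 hx2 hx1 hx0).
- by case: (cL2L1 hy2 hy0 hy1 hx2 hx1 hx0).
- exists (x0 y / x0 x)%R; first by rewrite mulf_neq0 ?invr_neq0.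
  apply: scale_eq; [by rewrite divfK | by rewrite hx1 hy1 mulr0 | by rewrite hx2 hy2 mulr0].
Qed.


Definition W (x : 'rV[F]_3) : nat := count (fun p => dot x p != 0%R) cols.

Lemma WZ x : W x + Z x = size cols.
Proof. by rewrite addnC -(count_predC (fun p => dot x p == 0%R)). Qed.

Lemma size_cols : size cols = Z 0%R.
Proof.
by rewrite /Z -(count_predT cols); apply: eq_count => p; rewrite /dot !mxE !mul0r !addr0 eqxx.
Qed.

Lemma T_gt0 : 0 < T.
Proof. have := sum_r; have := q_gt1; set TT := T; move: TT => TT; set Q := q; nia. Qed.

Lemma rT c : c != 0%R -> r c <= T - j.
Proof. by move=> cn; rewrite -sum_r' (bigD1 c) //= /r' (negbTE cn) leq_addr. Qed.

Lemma Zlt x : x != 0%R -> Z x < Z 0%R.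
Proof.
move=> nx; rewrite Z0; have hT := T_gt0; have hq := q_gt1.
case: (cls nx) => [hx|[hx2 hx1 hx0]|[hx2 hx0 hx1]|[hx2 hx1 hx0]].
- rewrite ZG //; have := r_lt (- x0 x / x2 x)%R; have := r_lt (- x1 x / x2 x)%R.
  have := Lam'_le (x0 x) (x1 x).
  set a := r _; set b := r _; set c := Lam _ _ _; set TJ := T - j; set TT := T; set Q := q.
  move=> h1 h2 h3; nia.
- rewrite ZN //; have := rT (_ : (- x0 x / x1 x)%R != 0%R).
  rewrite mulf_eq0 oppr_eq0 invr_eq0 negb_or hx0 hx1 => /(_ isT).
  set a := r _; set TJ := T - j; set TT := T; set Q := q; move=> h; nia.
- rewrite ZL2 //; set TJ := T - j; set TT := T in hT *; set Q := q in hq *; nia.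
- rewrite ZL1 //; set TJ := T - j; set TT := T in hT *; set Q := q in hq *; nia.
Qed.

Lemma W_gt0 x : x != 0%R -> 0 < W x.
Proof. move=> /Zlt; have := WZ x; rewrite size_cols; lia. Qed.

Lemma W_eq x y : x != 0%R -> y != 0%R -> W x = W y -> exists2 l : F, l != 0%R & y = (l *: x)%R.
Proof. move=> nx ny e; apply: decode => //; have := WZ x; have := WZ y; lia. Qed.

Lemma WZ_scale (l : F) x : l != 0%R -> W (l *: x)%R = W x.
Proof.
move=> ln; apply: eq_count => p; rewrite /dot !mxE -!mulrA -!mulrDr mulf_eq0 (negbTE ln) //.
Qed.

Lemma budget : 2 * Z 0%R <= (q - 1) * (q ^ 3 + q ^ 2 + q).
Proof.
rewrite Z0; have := sum_r; have := j_gt0; have := j_leT.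
set TT := T; set J := j; set Q := q; move=> h1 h2 h3.
rewrite !expnS expn0 !muln1.
have e : TT * (Q * Q + Q + 1) * 2 = (Q - 1) * (Q * (Q * Q) + Q * Q + Q) by nia.
nia.
Qed.


Definition Gm : 'M[F]_(3, size cols) :=
  \matrix_(i < 3, k < size cols)
    (let p := nth (0, 0, 0)%R cols k in if i == o0 then p.1.1 else if i == o1 then p.1.2 else p.2).

Lemma mulG x k : (x *m Gm)%R ord0 k = dot x (nth (0, 0, 0)%R cols k).
Proof.
rewrite !mxE !big_ord_recl big_ord0 !mxE /= addr0 /dot addrA.
have -> : lift ord0 (ord0 : 'I_2) = o1 by apply: val_inj.
have -> : lift ord0 (lift ord0 (ord0 : 'I_1)) = o2 by apply: val_inj.
by have -> : (ord0 : 'I_3) = o0 by apply: val_inj.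
Qed.

Lemma wtG x : wt (x *m Gm)%R = W x.
Proof.
rewrite /wt /W -(card_count (0, 0, 0)%R); apply: eq_card => i; rewrite !inE.
by rewrite (mulG x i).
Qed.

Lemma wt0 n : wt (0 : 'rV[F]_n)%R = 0.
Proof.
rewrite /wt; apply/eqP; rewrite cards_eq0; apply/eqP/setP => i.
by rewrite !inE mxE eqxx.
Qed.

Lemma G_nz (x : 'rV[F]_3) : x != 0%R -> (x *m Gm)%R != 0%R.
Proof.
move=> nx; apply/eqP => e; have := W_gt0 nx; rewrite -wtG e (wt0 (size cols)).
by [].
Qed.

Definition fG : 'Hom('rV[F]_3, 'rV[F]_(size cols)) := linfun (mulmxr Gm).
Definition CG : {vspace 'rV[F]_(size cols)} := limg fG.

Lemma memCG v : reflect (exists x, v = (x *m Gm)%R) (v \in CG).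
Proof.
apply: (iffP memv_imgP) => [[x _ ->]|[x ->]]; exists x; rewrite ?memvf ?lfunE //.
Qed.

Lemma dimCG : \dim CG = 3.
Proof.
have inj : injective fG.
  move=> a b; rewrite !lfunE /= => e; apply/eqP; rewrite -subr_eq0.
  apply/negPn/negP => /G_nz; rewrite mulmxBl e subrr eqxx.
  by [].
rewrite /CG limg_dim_eq; first by rewrite dimvf dim_matrix.
by move/lker0P: inj => /eqP ->; rewrite capv0.
Qed.

Definition ek (k : 'I_3) : 'rV[F]_3 := \row_(i < 3) (if i == k then 1 else 0)%R.

Lemma cols_one p : p \in cols -> [\/ p.1.1 = 1%R, p.1.2 = 1%R | p.2 = 1%R].
Proof.
rewrite !mem_cat => /or4P [| | |].
- by rewrite mem_nseq => /andP [_ /eqP ->]; constructor 3.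
- by case/flatten_mapP => c _; rewrite mem_nseq => /andP [_ /eqP ->]; constructor 1.
- by case/flatten_mapP => c _; rewrite mem_nseq => /andP [_ /eqP ->]; constructor 2.
- by case/flatten_mapP => c _; rewrite mem_nseq => /andP [_ /eqP ->]; constructor 1.
Qed.

Lemma nondegCG : nondeg_code CG.
Proof.
move=> i; have /cols_one : nth (0, 0, 0)%R cols i \in cols by apply: mem_nth.
case=> h; [exists (ek o0 *m Gm)%R | exists (ek o1 *m Gm)%R | exists (ek o2 *m Gm)%R];
  try (by apply/memCG; eexists);
  by rewrite (mulG _ i) /dot !mxE /= h !mul0r !mul1r ?add0r ?addr0 oner_eq0.
Qed.


Definition ws := [seq W x | x <- enum [pred x : 'rV[F]_3 | x != 0%R]].

Lemma nzw_mem : nonzero_weights CG =i undup ws.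
Proof.
move=> w; rewrite /nonzero_weights !mem_undup; apply/mapP/mapP.
- case=> v; rewrite mem_filter mem_enum andbT => /andP [/memCG [x ->] nv] ->.
  exists x; last by rewrite wtG.
  rewrite mem_enum inE; apply: contra nv => /eqP ->; by rewrite mul0mx.
- case=> x; rewrite mem_enum inE => nx ->.
  exists (x *m Gm)%R; last by rewrite wtG.
  by rewrite mem_filter mem_enum andbT G_nz // andbT; apply/memCG; exists x.
Qed.

Lemma fiber x0 : x0 != 0%R -> \sum_(x : 'rV[F]_3 | x != 0%R) (W x == W x0) = q - 1.
Proof.
move=> nx0.
rewrite (eq_bigr (fun x => if W x == W x0 then 1 else 0)); last by move=> x _; case: eqP.
rewrite -big_mkcondr sum1_card.
have -> : #|[pred x : 'rV[F]_3 | (x != 0%R) && (W x == W x0)]| =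
          #|[set (l *: x0)%R | l in [pred l : F | l != 0%R]]|.
  apply: eq_card => x; rewrite !inE; apply/andP/imsetP.
  - case=> nx /eqP e; have [l ln ->] := W_eq nx0 nx (esym e); by exists l.
  - case=> l; rewrite inE => ln ->; split; first by rewrite scaler_eq0 negb_or ln.
    by rewrite WZ_scale.
rewrite card_imset; last first.
  move=> a b e; apply/eqP; rewrite -subr_eq0.
  have : ((a - b) *: x0 == 0)%R by rewrite scalerBl e subrr.
  by rewrite scaler_eq0 (negbTE nx0) orbF.
by rewrite (@cardC1 F 0%R) -subn1.
Qed.

Lemma count_main : size (undup ws) * (q - 1) = q ^ 3 - 1.
Proof.
have hc : #|[pred x : 'rV[F]_3 | x != 0%R]| = q ^ 3 - 1.
  by rewrite (@cardC1 _ 0%R) card_mx -subn1.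
rewrite -hc -(sum1_card [pred x : 'rV[F]_3 | x != 0%R]).
have e1 : \sum_(x in [pred x : 'rV[F]_3 | x != 0%R]) 1 =
  \sum_(x in [pred x : 'rV[F]_3 | x != 0%R]) \sum_(w <- undup ws) (W x == w).
  apply: eq_bigr => x nx.
  rewrite (eq_bigr (fun w => if W x == w then 1 else 0)); last by move=> w _; case: eqP.
  rewrite -big_mkcond sum1_count.
  rewrite (eq_count (a2 := pred1 (W x))); last by move=> w; rewrite /= eq_sym.
  rewrite count_uniq_mem ?undup_uniq // mem_undup map_f //.
  by rewrite mem_enum.
rewrite e1 exchange_big /= big_seq (eq_bigr (fun _ => q - 1)); last first.
  move=> w; rewrite mem_undup => /mapP [x0]; rewrite mem_enum inE => nx0 ->.
  by rewrite -(fiber nx0); apply: eq_bigr => x _; rewrite eq_sym.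
by rewrite -big_seq big_const_seq count_predT iter_addn_0 mulnC.
Qed.


Lemma main_r : exists (n : nat) (C : {vspace 'rV[F]_n}),
    [/\ \dim C = 3%N, nondeg_code C, MWS C
      & (2 * n <= (q - 1) * (q ^ 3 + q ^ 2 + q))%N].
Proof.
exists (size cols), CG; split.
- exact: dimCG.
- exact: nondegCG.
- rewrite /MWS dimCG.
  have -> : size (nonzero_weights CG) = size (undup ws).
    by apply: perm_size; apply: uniq_perm; rewrite ?undup_uniq //; apply: nzw_mem.
  rewrite -count_main mulnK //; have := q_gt1; lia.
- rewrite size_cols; exact: budget.
Qed.

End Cons.
Lemma exists_r (F : finFieldType) : exists r : F -> nat,
  [/\ injective r, forall c, r c < #|F|, r 0%R = #|F|./2 & r (-1)%R = 0].
Proof.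
have hq : 1 < #|F| := card_finNzRing_gt1 F.
have hj : #|F|./2 < #|F| by rewrite -{2}(odd_double_half #|F|); case: (odd _); lia.
have hj0 : 0 < #|F|./2 by move: hq; case: #|F| => [|[|k]].
pose jj : 'I_#|F| := Ordinal hj.
pose z : 'I_#|F| := Ordinal (ltnW hq).
pose e0 := enum_rank (0%R : F).
pose t1 := tperm e0 jj.
pose k := t1 (enum_rank (-1 : F)%R).
pose t2 := tperm k z.
pose s : {perm 'I_#|F|} := (t1 * t2)%g.
exists (fun c => val (s (enum_rank c))); split.
- by move=> a b /val_inj /perm_inj /enum_rank_inj.
- by move=> c; apply: ltn_ord.
- rewrite permM /t1 tpermL tpermD //.
    rewrite /k -[X in _ != X](tpermL e0 jj) -/t1.
    apply/eqP => /perm_inj /enum_rank_inj /eqP.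
    by rewrite oppr_eq0 oner_eq0.
  by apply/eqP => /(congr1 val) /= ; lia.
- by rewrite permM -/k /t2 tpermL.
Qed.

Unset Implicit Arguments.

Theorem mainTheorem14 (F : finFieldType) :
  let q := #|F| in
  exists (n : nat) (C : {vspace 'rV[F]_n}),
    [/\ \dim C = 3%N, nondeg_code C, MWS C
      & (2 * n <= (q - 1) * (q ^ 3 + q ^ 2 + q))%N].
Proof.
move=> q; have [r [h1 h2 h3 h4]] := exists_r F.
by apply: main_r; eassumption.
Qed.
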